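(* Let $m$ and $n$ be positive integers, let $(K,\partial_0,\dots,\partial_{m-1})$ be a field with $m$ commuting derivations, and let $L=K(a_h^{\xi}\colon(\xi,h)\lhd(\tau,\ell))$ be a field extension of $K$ generated by elements indexed by the initial segment of $(\mathbb{N}^m\times n,\unlhd)$ below $(\tau,\ell)$, where $(\tau,\ell)\in\mathbb{N}^m\times n$ or $(\tau,\ell)=\infty$. Suppose $L$, with these generators, meets the differential condition. Then: (1) each $\partial_i$ extends to a derivation $D_i$ from $K(a_h^{\xi}\colon(\xi+\varepsilon_i,h)\lhd(\tau,\ell))$ into $L$ such that $D_ia_k^{\sigma}=a_k^{\sigma+\varepsilon_i}$ whenever $(\sigma+\varepsilon_i,k)\lhd(\tau,\ell)$; (2) if $a_k^{\sigma}$ is a separable leader and $(\sigma+\varepsilon_i,k)\lhd(\tau,\ell)$, then $a_k^{\sigma+\varepsilon_i}\in K(a_h^{\xi}\colon(\xi,h)\lhd(\sigma+\varepsilon_i,k))$; in particular $a_k^{\sigma+\varepsilon_i}$ is a separable leader; (3) consequently, every generator $a_k^{\rho}$ of $L/K$ that is above a separable leader $a_k^{\sigma}$ (i.e. $\sigma\le\rho$) is itself a separable leader.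
   Context: $n$ denotes also the set $\{0,\dots,n-1\}$. For $\sigma\in\mathbb{N}^m$ write $|\sigma|=\sum_{i<m}\sigma(i)$, and let $\le$ be the componentwise (product) order on $\mathbb{N}^m$. For $i<m$, $\varepsilon_i\in\mathbb{N}^m$ is the characteristic function of $\{i\}$; addition/subtraction on $\mathbb{N}^m$ is componentwise. The total order $\unlhd$ on $\mathbb{N}^m\times n$ is defined by $(\xi,k)\unlhd(\eta,g)$ iff $(|\xi|,k,\xi(0),\dots,\xi(m-2))$ is lexicographically $\le(|\eta|,g,\eta(0),\dots,\eta(m-2))$; $\lhd$ is its strict version, and $(\sigma,k)\lhd\infty$ for all $(\sigma,k)$. For $L=K(a_h^{\xi}\colon(\xi,h)\lhd(\tau,\ell))$: $a_k^\sigma$ is below $a_k^\rho$ (and $a_k^\rho$ above $a_k^\sigma$) if $\sigma\le\rho$. $L$ meets the differential condition if: whenever $i<m$, $(\sigma+\varepsilon_i,k)\lhd(\tau,\ell)$, and $f$ is a polynomial over $K$ in variables $(x_h^{\xi}\colon(\xi,h)\unlhd(\sigma,k))$ with $f(a_h^{\xi}\colon(\xi,h)\unlhd(\sigma,k))=0$, then $\sum_{(\eta,g)\unlhd(\sigma,k)}\frac{\partial f}{\partial x_g^{\eta}}(a)\cdot a_g^{\eta+\varepsilon_i}+f^{\partial_i}(a)=0$, where $a=(a_h^{\xi}\colon(\xi,h)\unlhd(\sigma,k))$ and $f^{\partial_i}$ is obtained from $f$ by applying $\partial_i$ to its coefficients. A generator $a_k^{\sigma}$ is a leader if it is algebraic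 over $K(a_h^{\xi}\colon(\xi,h)\lhd(\sigma,k))$, and a separable leader if it is separably algebraic over that field. *)

(* Defs.v *)
From HB Require Import structures.
From mathcomp Require Import all_boot all_order all_algebra all_field.
From mathcomp Require Import mpoly.
Set Implicit Arguments. Unset Strict Implicit. Unset Printing Implicit Defensive.
Import Order.TTheory GRing.Theory.
Local Open Scope ring_scope.

Definition mindex (m : nat) := {ffun 'I_m -> nat}.

Definition mabs (m : nat) (s : mindex m) : nat := (\sum_(i < m) s i)%N.

Definition meps (m : nat) (i : 'I_m) : mindex m := [ffun j => nat_of_bool (j == i)].
Definition maddeps (m : nat) (s : mindex m) (i : 'I_m) : mindex m :=
  [ffun j => (s j + meps i j)%N].

Definition mle (m : nat) (s r : mindex m) : Prop := forall j : 'I_m, (s j <= r j)%N.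

Definition idx (m n : nat) := (mindex m * 'I_n)%type.

Fixpoint lexle (s t : seq nat) : bool :=
  match s, t with
  | [::], _ => true
  | _ :: _, [::] => false
  | x :: s', y :: t' => (x < y)%N || ((x == y) && lexle s' t')
  end.

Definition idx_key (m n : nat) (p : idx m n) : seq nat :=
  [:: mabs p.1, nat_of_ord p.2 & [seq p.1 j | j <- take m.-1 (enum 'I_m)]].

Definition idx_le (m n : nat) (p q : idx m n) : bool := lexle (idx_key p) (idx_key q).
Definition idx_lt (m n : nat) (p q : idx m n) : bool := idx_le p q && ~~ idx_le q p.

(* bounds: Some (tau,l) or None = infinity; (sigma,k) lhd infinity always *)
Definition below (m n : nat) (p : idx m n) (b : option (idx m n)) : bool :=
  if b is Some q then idx_lt p q else true.

Inductive in_gen (K L : fieldType) (iota : {rmorphism K -> L}) (S : L -> Prop)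
  : L -> Prop :=
  | gen_K c : in_gen iota S (iota c)
  | gen_S x : S x -> in_gen iota S x
  | gen_add x y : in_gen iota S x -> in_gen iota S y -> in_gen iota S (x + y)
  | gen_opp x : in_gen iota S x -> in_gen iota S (- x)
  | gen_mul x y : in_gen iota S x -> in_gen iota S y -> in_gen iota S (x * y)
  | gen_inv x : in_gen iota S x -> in_gen iota S (x^-1).

Definition genf (K L : fieldType) (iota : {rmorphism K -> L}) (m n : nat)
  (a : mindex m -> 'I_n -> L) (P : idx m n -> bool) : L -> Prop :=
  in_gen iota (fun x => exists p : idx m n, P p /\ x = a p.1 p.2).

Definition is_derivation (K : fieldType) (d : K -> K) : Prop :=
  (forall x y, d (x + y) = d x + d y) /\ (forall x y, d (x * y) = d x * y + x * d y).

Definition algebraic_over (L : fieldType) (F : L -> Prop) (x : L) : Prop :=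
  exists p : {poly L}, [/\ p != 0, forall j, F p`_j & root p x].

Definition sep_algebraic_over (L : fieldType) (F : L -> Prop) (x : L) : Prop :=
  exists p : {poly L}, [/\ p != 0, forall j, F p`_j, root p x & separable_poly p].

Definition leader (K L : fieldType) (iota : {rmorphism K -> L}) (m n : nat)
  (a : mindex m -> 'I_n -> L) (s : mindex m) (k : 'I_n) : Prop :=
  algebraic_over (genf iota a (fun p => idx_lt p (s, k))) (a s k).

Definition sep_leader (K L : fieldType) (iota : {rmorphism K -> L}) (m n : nat)
  (a : mindex m -> 'I_n -> L) (s : mindex m) (k : 'I_n) : Prop :=
  sep_algebraic_over (genf iota a (fun p => idx_lt p (s, k))) (a s k).

(* A polynomial in the variables
   (x_h^xi : (xi,h) unlhd (sigma,k)) is a multivariate polynomial in N variables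
   together with an enumeration vars (without repetition) of this finite set. *)
Definition differential_condition (K L : fieldType) (iota : {rmorphism K -> L})
  (m n : nat) (d : 'I_m -> K -> K) (a : mindex m -> 'I_n -> L)
  (b : option (idx m n)) : Prop :=
  forall (i : 'I_m) (s : mindex m) (k : 'I_n),
    below (maddeps s i, k) b ->
    forall (N : nat) (vars : N.-tuple (idx m n)),
      uniq vars -> (forall q, (q \in vars) = idx_le q (s, k)) ->
      forall f : {mpoly K[N]},
        let av := fun j : 'I_N => a (tnth vars j).1 (tnth vars j).2 in
        mmap iota av f = 0 ->
        \sum_(j < N) mmap iota av (mderiv j f)
                       * a (maddeps (tnth vars j).1 i) (tnth vars j).2
        + mmap (fun c => iota (d i c)) av f = 0.

(* Main.v *)
Require Import Defs.
From HB Require Import structures.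
From mathcomp Require Import all_boot all_order all_algebra all_field.
From mathcomp Require Import mpoly.
From Stdlib Require Import ClassicalEpsilon.
From mathcomp Require Import ring.
Set Implicit Arguments. Unset Strict Implicit. Unset Printing Implicit Defensive.
Import GRing.Theory.
Local Open Scope ring_scope.
Definition mkadd (K L : fieldType) (f : K -> L) (H : zmod_morphism f) : {additive K -> L} :=
  HB.pack_for {additive K -> L} f (GRing.isZmodMorphism.Build K L f H).

Section MP.
Variables (K L : fieldType) (iota : {rmorphism K -> L}) (dd : {additive K -> L}).
Hypothesis ddM : forall x y, dd (x * y) = dd x * iota y + iota x * dd y.

Lemma dd1 : dd 1 = 0.
Proof.
have := ddM 1 1; rewrite mulr1 rmorph1 mulr1 mul1r => /eqP.
by rewrite eq_sym -subr_eq0 addrK => /eqP.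
Qed.

Lemma mmapZX (g : {additive K -> L}) n (h : 'I_n -> L) c mm :
  mmap g h (c *: 'X_[mm]) = g c * mmap1 h mm.
Proof.
have [->|nz] := eqVneq c 0; first by rewrite scale0r mmap0 raddf0 mul0r.
rewrite /mmap (perm_big _ (msuppZ _ nz)) msuppX big_seq1 mcoeffZ mcoeffX eqxx.
by rewrite mulr1.
Qed.

Section Fixed.
Variable N : nat.
Implicit Types (f g : {mpoly K[N]}) (av bv : 'I_N -> L).

Definition ev av f := mmap iota av f.
Definition Dl av bv f := \sum_(j < N) ev av (mderiv j f) * bv j + mmap dd av f.

Lemma evD av f g : ev av (f + g) = ev av f + ev av g. Proof. exact: rmorphD. Qed.
Lemma evB av f g : ev av (f - g) = ev av f - ev av g. Proof. exact: rmorphB. Qed.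
Lemma evN av f : ev av (- f) = - ev av f. Proof. exact: rmorphN. Qed.
Lemma ev0 av : ev av 0 = 0. Proof. exact: rmorph0. Qed.
Lemma evM av f g : ev av (f * g) = ev av f * ev av g. Proof. exact: rmorphM. Qed.
Lemma evC av c : ev av c%:MP = iota c. Proof. exact: mmapC. Qed.
Lemma ev1 av : ev av 1 = 1. Proof. exact: rmorph1. Qed.
Lemma evX av j : ev av 'X_j = av j. Proof. by rewrite /ev mmapX mmap1U. Qed.

Lemma mmapddM av f g :
  mmap dd av (f * g) = mmap dd av f * ev av g + ev av f * mmap dd av g.
Proof.
pose k := maxn (msize f) (msize g).
have hf : (msize f <= k)%N by rewrite leq_maxl.
have hg : (msize g <= k)%N by rewrite leq_maxr.
rewrite (mpolywME hf hg) raddf_sum /= /ev.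
rewrite (mmapE k hf) (mmapE k hg) (mmapE k hf) (mmapE k hg).
rewrite !big_distrlr /= !pair_big /= -big_split /=; apply: eq_bigr => -[m1 m2] _ /=.
rewrite mmapZX ddM commr_mmap1_M; last by move=> *; apply: mulrC.
by ring.
Qed.


Lemma DlD av bv f g : Dl av bv (f + g) = Dl av bv f + Dl av bv g.
Proof.
rewrite /Dl mmapD.
under eq_bigr do rewrite mderivD evD mulrDl.
by rewrite big_split /=; ring.
Qed.

Lemma DlM av bv f g : Dl av bv (f * g) = Dl av bv f * ev av g + ev av f * Dl av bv g.
Proof.
rewrite /Dl mmapddM.
under eq_bigr do rewrite mderivM evD !evM.
rewrite (eq_bigr (fun j => ev av (f^`M(j)) * bv j * ev av g + ev av f * (ev av (g^`M(j)) * bv j))); last by move=> j _; ring.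
rewrite big_split /= -mulr_suml -mulr_sumr; ring.
Qed.

Lemma DlB av bv f g : Dl av bv (f - g) = Dl av bv f - Dl av bv g.
Proof. by apply/eqP; rewrite eq_sym subr_eq -DlD subrK. Qed.

Lemma DlC av bv c : Dl av bv c%:MP = dd c.
Proof.
rewrite /Dl big1 ?add0r ?mmapC // => j _.
by rewrite mderivC /ev mmap0 mul0r.
Qed.

Lemma Dl1 av bv : Dl av bv 1 = 0.
Proof. by rewrite -[1]/(1%:MP) DlC dd1. Qed.

Lemma DlX av bv j : Dl av bv 'X_j = bv j.
Proof.
rewrite /Dl (bigD1 j) //= big1 ?addr0.
  rewrite mderivX mnm1E eqxx /= scale1r.
  rewrite (_ : (U_(j) - U_(j))%MM = 0%MM); last by apply/mnmP=> l; rewrite mnmBE subnn mnm0E.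
  rewrite mpolyX0 ev1 mul1r.
  rewrite -[X in mmap _ _ X]scale1r mmapZX dd1 mul0r addr0 //.
move=> l nl; rewrite mderivX mnm1E eq_sym (negbTE nl) scale0r /ev mmap0 mul0r //.
Qed.

Lemma mpoly_closure (P : {mpoly K[N]} -> Prop) :
  (forall c, P c%:MP) -> (forall j, P 'X_j) ->
  (forall f g, P f -> P g -> P (f + g)) -> (forall f g, P f -> P g -> P (f * g)) ->
  forall f, P f.
Proof.
move=> PC PX PD PM f; elim/mpolyind: f => [|c mm p _ _ Pp].
  by rewrite -[0]/(0%:MP); apply: PC.
apply: (PD) => //; rewrite -mul_mpolyC; apply: (PM) => //.
rewrite mpolyXE_id; apply: (big_ind P); [by rewrite -[1]/(1%:MP) | exact: PM | move=> j _]. move: (mm j) => e; elim: e => [|e IH]; first by rewrite expr0 -[1]/(1%:MP).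
by rewrite exprS; apply: (PM).
Qed.


End Fixed.

Section Ren.
Variables (N M : nat) (phi : 'I_N -> 'I_M).
Definition ren (f : {mpoly K[N]}) : {mpoly K[M]} := comp_mpoly [tuple 'X_(phi j) | j < N] f.

Lemma renD f g : ren (f + g) = ren f + ren g. Proof. exact: comp_mpolyD. Qed.
Lemma renM f g : ren (f * g) = ren f * ren g. Proof. exact: rmorphM. Qed.
Lemma renC c : ren c%:MP = c%:MP. Proof. exact: comp_mpolyC. Qed.
Lemma renX j : ren 'X_j = 'X_(phi j).
Proof. by rewrite /ren comp_mpolyXU -tnth_nth tnth_mktuple. Qed.

Lemma ev_ren (av : 'I_M -> L) f : ev av (ren f) = ev (fun j => av (phi j)) f.
Proof.
elim/mpoly_closure: f => [c|j|f g Hf Hg|f g Hf Hg].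
- by rewrite renC !evC.
- by rewrite renX !evX.
- by rewrite renD !evD Hf Hg.
- by rewrite renM !evM Hf Hg.
Qed.

Lemma Dl_ren (av bv : 'I_M -> L) f :
  Dl av bv (ren f) = Dl (fun j => av (phi j)) (fun j => bv (phi j)) f.
Proof.
elim/mpoly_closure: f => [c|j|f g Hf Hg|f g Hf Hg].
- by rewrite renC !DlC.
- by rewrite renX !DlX.
- by rewrite renD !DlD Hf Hg.
- by rewrite renM !DlM Hf Hg !ev_ren.
Qed.
End Ren.


Lemma zero_vars (av bv : 'I_0 -> L) (f : {mpoly K[0]}) :
  exists c, ev av f = iota c /\ Dl av bv f = dd c.
Proof.
elim/mpoly_closure: f => [c|[]//|f g [c1 [e1 f1]] [c2 [e2 f2]]|f g [c1 [e1 f1]] [c2 [e2 f2]]].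
- by exists c; rewrite evC DlC.
- by exists (c1 + c2); rewrite evD DlD e1 e2 f1 f2 !raddfD.
- by exists (c1 * c2); rewrite evM DlM e1 e2 f1 f2 rmorphM ddM.
Qed.

Lemma ev_ext N (av1 av2 : 'I_N -> L) f : (forall j, av1 j = av2 j) -> ev av1 f = ev av2 f.
Proof.
move=> h; rewrite /ev /mmap; apply: eq_bigr => mm _; congr (_ * _).
exact: mmap1_eq.
Qed.

Lemma Dl_ext N (av1 av2 bv1 bv2 : 'I_N -> L) f :
  (forall j, av1 j = av2 j) -> (forall j, bv1 j = bv2 j) -> Dl av1 bv1 f = Dl av2 bv2 f.
Proof.
move=> h1 h2; rewrite /Dl; congr (_ + _).
  by apply: eq_bigr => j _; rewrite h2 (ev_ext _ h1).
rewrite /mmap; apply: eq_bigr => mm _; congr (_ * _); exact: mmap1_eq.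
Qed.

End MP.
Section Order.
Variables m n : nat.
Implicit Types (p q r : idx m n) (s t u : seq nat).

Lemma lexle_refl s : lexle s s.
Proof. by elim: s => //= x s ->; rewrite eqxx ltnn. Qed.

Lemma lexle_trans s t u : lexle s t -> lexle t u -> lexle s u.
Proof.
elim: s t u => [//|x s IH] [//|y t] [//|z u] /=.
case/orP=> [xy|/andP[/eqP<- st]]; case/orP=> [yz|/andP[/eqP<- tu]].
- by rewrite (ltn_trans xy yz).
- by rewrite xy.
- by rewrite yz.
- by rewrite eqxx (IH _ _ st tu) orbT.
Qed.

Lemma lexle_total s t : lexle s t || lexle t s.
Proof.
elim: s t => [//|x s IH] [|y t] //=.
case: (ltngtP x y) => //= ->; by rewrite IH.
Qed.

Definition addl s t := [seq x.1 + x.2 | x <- zip s t]%N.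

Lemma lexle_addl c s t : size s = size c -> size t = size c ->
  lexle (addl s c) (addl t c) = lexle s t.
Proof.
elim: c s t => [|z c IH] [|x s] [|y t] //= [hs] [ht].
by rewrite ltn_add2r eqn_add2r IH.
Qed.

Lemma map_zip_add (T : Type) (F G : T -> nat) (l : seq T) :
  addl [seq F j | j <- l] [seq G j | j <- l] = [seq F j + G j | j <- l]%N.
Proof. by rewrite /addl; elim: l => //= x l ->. Qed.

Lemma mabs_maddeps (s : mindex m) i : mabs (maddeps s i) = (mabs s).+1.
Proof.
rewrite /mabs /maddeps (eq_bigr (fun j => s j + meps i j)%N); last by move=> j _; rewrite ffunE.
rewrite big_split /= -addn1; congr (_ + _)%N.
rewrite (bigD1 i) //= /meps ffunE eqxx big1 ?addn0 // => j nj; by rewrite ffunE (negbTE nj).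
Qed.

Definition cvec (i : 'I_m) : seq nat :=
  [:: 1%N, 0%N & [seq nat_of_bool (j == i) | j <- take m.-1 (enum 'I_m)]].

Lemma key_shift p i : idx_key (maddeps p.1 i, p.2) = addl (idx_key p) (cvec i).
Proof.
rewrite /idx_key /cvec /= mabs_maddeps /addl /= addn0 addn1.
congr [:: _, _ & _].
rewrite -/(addl _ _) (map_zip_add (fun j => p.1 j) (fun j => nat_of_bool (j == i))).
by apply: eq_map => j; rewrite /maddeps /meps !ffunE.
Qed.


Lemma size_key' p i : size (idx_key p) = size (cvec i).
Proof. by rewrite /idx_key /cvec /= !size_map. Qed.

Lemma idx_le_shift p q i :
  idx_le (maddeps p.1 i, p.2) (maddeps q.1 i, q.2) = idx_le p q.
Proof. rewrite /idx_le (key_shift p) (key_shift q). by apply: lexle_addl; apply: size_key'. Qed.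

Lemma idx_lt_shift p q i :
  idx_lt (maddeps p.1 i, p.2) (maddeps q.1 i, q.2) = idx_lt p q.
Proof. by rewrite /idx_lt !idx_le_shift. Qed.

Lemma idx_le_refl p : idx_le p p. Proof. exact: lexle_refl. Qed.
Lemma idx_le_trans p q r : idx_le p q -> idx_le q r -> idx_le p r.
Proof. exact: lexle_trans. Qed.
Lemma idx_le_total p q : idx_le p q || idx_le q p.
Proof. exact: lexle_total. Qed.
Lemma idx_ltW p q : idx_lt p q -> idx_le p q.
Proof. by case/andP. Qed.
Lemma idx_le_lt_trans p q r : idx_le p q -> idx_lt q r -> idx_lt p r.
Proof.
move=> pq /andP[qr nrq]; rewrite /idx_lt (idx_le_trans pq qr) /=.
by apply: contra nrq => rp; apply: idx_le_trans rp pq.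
Qed.
Lemma idx_lt_le_trans p q r : idx_lt p q -> idx_le q r -> idx_lt p r.
Proof.
move=> /andP[pq nqp] qr; rewrite /idx_lt (idx_le_trans pq qr) /=.
by apply: contra nqp => rp; apply: idx_le_trans qr rp.
Qed.
Lemma idx_lt_trans p q r : idx_lt p q -> idx_lt q r -> idx_lt p r.
Proof. by move=> /idx_ltW; apply: idx_le_lt_trans. Qed.

Lemma below_le p q b : idx_le p q -> below q b -> below p b.
Proof. by case: b => //= c pq; apply: idx_le_lt_trans. Qed.

Lemma below_lt p q b : idx_lt p q -> below q b -> below p b.
Proof. by move=> /idx_ltW; apply: below_le. Qed.

Lemma lt_step (s : mindex m) (k : 'I_n) i : idx_lt (s, k) (maddeps s i, k).
Proof.
by rewrite /idx_lt /idx_le /idx_key /= mabs_maddeps ltnSn /= ltnNge leqnSn /= eqn_leq ltnn.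
Qed.

Lemma idx_le_mabs p q : idx_le p q -> (mabs p.1 <= mabs q.1)%N.
Proof.
rewrite /idx_le /idx_key /=; case/orP=> [/ltnW//|/andP[/eqP-> _]] //.
Qed.

Lemma mle_mabs (s r : mindex m) : mle s r -> (mabs s <= mabs r)%N.
Proof. by move=> h; apply: leq_sum => j _; apply: h. Qed.

Lemma mle_eq (s r : mindex m) : mle s r -> mabs s = mabs r -> s = r.
Proof.
move=> h e; apply/ffunP => j; apply/eqP; rewrite eqn_leq h /=.
have : (\sum_(l < m) (r l - s l) = 0)%N.
  apply/eqP; rewrite -(eqn_add2l (mabs s)) addn0 {2}e /mabs -big_split /=.
  by apply/eqP/eq_bigr => l _; rewrite subnKC.
move/eqP; rewrite sum_nat_eq0 => /forallP/(_ j)/implyP/(_ isT).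
by rewrite subn_eq0.
Qed.

Lemma mle_idx_le (s r : mindex m) (k : 'I_n) : mle s r -> idx_le (s, k) (r, k).
Proof.
move=> h; have := mle_mabs h; rewrite leq_eqVlt => /orP[/eqP e|lt].
  by rewrite (mle_eq h e) idx_le_refl.
by rewrite /idx_le /idx_key /= lt.
Qed.
End Order.
Lemma in_gen_mono (K L : fieldType) (iota : {rmorphism K -> L}) (S S' : L -> Prop) x :
  (forall y, S y -> S' y) -> in_gen iota S x -> in_gen iota S' x.
Proof.
move=> h; elim=> [c|y /h Sy|y z _ Hy _ Hz|y _ Hy|y z _ Hy _ Hz|y _ Hy].
- exact: gen_K.
- exact: gen_S.
- exact: gen_add.
- exact: gen_opp.
- exact: gen_mul.
- exact: gen_inv.
Qed.

Lemma in_gen0 (K L : fieldType) (iota : {rmorphism K -> L}) S : in_gen iota S 0.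
Proof. by rewrite -(rmorph0 iota); apply: gen_K. Qed.

Lemma sep_deriv_nz (L : fieldType) (p : {poly L}) x :
  separable_poly p -> root p x -> p^`().[x] != 0.
Proof.
move=> sp /factor_theorem[q pq]; move: sp; rewrite pq separable_root => /andP[_ nr].
by rewrite derivM derivXsubC hornerD !hornerM hornerXsubC subrr mulr0 add0r hornerC mulr1.
Qed.

Section Main.
Variables (m n : nat) (K L : fieldType) (d : 'I_m -> K -> K)
  (iota : {rmorphism K -> L}) (a : mindex m -> 'I_n -> L) (b : option (idx m n)).
Hypothesis Hder : forall i, is_derivation (d i).
Hypothesis Hdc : differential_condition iota d a b.

Lemma d0 i : d i 0 = 0.
Proof.
have [hD _] := Hder i; have := hD 0 0; rewrite addr0 => /eqP.
by rewrite eq_sym -subr_eq0 addrK => /eqP.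
Qed.

Lemma dN i x : d i (- x) = - d i x.
Proof.
have [hD _] := Hder i; apply/eqP; rewrite -subr_eq0 opprK -hD addNr d0 //.
Qed.

Lemma d1 i : d i 1 = 0.
Proof.
have [_ hM] := Hder i; have := hM 1 1; rewrite !mulr1 !mul1r => /eqP.
by rewrite eq_sym -subr_eq0 addrK => /eqP.
Qed.

Lemma dd_zm i : zmod_morphism (fun c => iota (d i c)).
Proof. by move=> x y /=; have [hD _] := Hder i; rewrite hD dN rmorphB. Qed.

Definition ddi i : {additive K -> L} := mkadd (dd_zm i).

Lemma ddiM i x y : ddi i (x * y) = ddi i x * iota y + iota x * ddi i y.
Proof. by have [_ hM] := Hder i; rewrite /= hM rmorphD !rmorphM. Qed.

Lemma max_exists (l : seq (idx m n)) :
  l != [::] -> exists2 q, q \in l & forall q', q' \in l -> idx_le q' q.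
Proof.
elim: l => // x l IH _; case: (eqVneq l [::]) => [->|ne].
  exists x; first by rewrite mem_seq1.
  by move=> q'; rewrite mem_seq1 => /eqP->; apply: idx_le_refl.
have [q ql qmax] := IH ne; case/orP: (idx_le_total x q) => h.
  exists q; first by rewrite in_cons ql orbT.
  by move=> q'; rewrite in_cons => /orP[/eqP->//|]; apply: qmax.
exists x; first by rewrite mem_head.
move=> q'; rewrite in_cons => /orP[/eqP->|/qmax h']; first exact: idx_le_refl.
exact: idx_le_trans h' h.
Qed.

Definition canon (q : idx m n) : seq (idx m n) :=
  undup [seq x <- allpairs (fun (g : {ffun 'I_m -> 'I_(mabs q.1).+1}) (h : 'I_n) =>
            (([ffun j => nat_of_ord (g j)] : mindex m), h))
            (enum {ffun 'I_m -> 'I_(mabs q.1).+1}) (enum 'I_n) | idx_le x q].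

Lemma canon_uniq q : uniq (canon q). Proof. exact: undup_uniq. Qed.

Lemma mem_canon q x : (x \in canon q) = idx_le x q.
Proof.
rewrite mem_undup mem_filter; apply/andP/idP => [[]//|h]; split=> //.
have hx : forall j, (x.1 j < (mabs q.1).+1)%N.
  move=> j; rewrite ltnS; apply: leq_trans (idx_le_mabs h).
  by rewrite /mabs (bigD1 j) //= leq_addr.
apply/allpairsP; exists ([ffun j => Ordinal (hx j)], x.2); rewrite !mem_enum; split=> //=.
case: x h hx => s k /= _ hx; congr (_, _); apply/ffunP => j; rewrite !ffunE //.
Qed.

Section Fixi.
Variable i : 'I_m.
Definition sh (p : idx m n) : idx m n := (maddeps p.1 i, p.2).
Definition av N (t : N.-tuple (idx m n)) (j : 'I_N) := a (tnth t j).1 (tnth t j).2.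
Definition bv N (t : N.-tuple (idx m n)) (j : 'I_N) := a (maddeps (tnth t j).1 i) (tnth t j).2.
Definition okv N (t : N.-tuple (idx m n)) := forall j, below (sh (tnth t j)) b.
Local Notation EV t := (ev iota (av t)).
Local Notation DL t := (Dl iota (ddi i) (av t) (bv t)).

Lemma K1 N (t : N.-tuple (idx m n)) f : okv t -> EV t f = 0 -> DL t f = 0.
Proof.
case: N t f => [|N] t f ok ev0.
  have [c [e1 e2]] := zero_vars (ddiM i) (av t) (bv t) f.
  by move: ev0; rewrite e2 e1 => /eqP; rewrite fmorph_eq0 => /eqP->; rewrite raddf0.
have tn : (t : seq _) != [::] by rewrite -size_eq0 size_tuple.
have [q qt qmax] := max_exists tn.
have okq : below (sh q) b by case/tnthP: qt => j ->; apply: ok.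
pose W := canon q; pose vars := in_tuple W.
have memW j : tnth t j \in W by rewrite mem_canon; apply: qmax; apply: mem_tnth.
have hphi j : (index (tnth t j) W < size W)%N by rewrite index_mem.
pose phi j := Ordinal (hphi j).
have tphi j : tnth vars (phi j) = tnth t j by rewrite (tnth_nth (tnth t j)) /= nth_index.
have e1 : EV t f = EV vars (ren phi f).
  by rewrite ev_ren; apply: ev_ext => j; rewrite /av tphi.
have e2 : DL t f = DL vars (ren phi f).
  by rewrite (Dl_ren (ddiM i)); apply: Dl_ext => j; rewrite /av /bv tphi.
rewrite e2; move: ev0; rewrite e1 => ev0.
have mq : forall x, (x \in vars) = idx_le x (q.1, q.2).
  by move=> x; rewrite -surjective_pairing mem_canon.
exact: (@Hdc i q.1 q.2 okq (size W) vars (canon_uniq q) mq (ren phi f) ev0).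
Qed.

Lemma okvP N (t : N.-tuple (idx m n)) : okv t <-> (forall q, q \in t -> below (sh q) b).
Proof.
split=> [ok q /tnthP[j ->]|h j]; first exact: ok.
by apply: h; apply: mem_tnth.
Qed.

Lemma okv_cat N1 N2 (t1 : N1.-tuple (idx m n)) (t2 : N2.-tuple (idx m n)) :
  okv t1 -> okv t2 -> okv [tuple of t1 ++ t2].
Proof.
move=> /okvP h1 /okvP h2; apply/okvP => q; rewrite mem_cat => /orP[]; [exact: h1|exact: h2].
Qed.

Lemma ren_facts N M (phi : 'I_N -> 'I_M) (t : N.-tuple (idx m n)) (t' : M.-tuple (idx m n)) g :
  (forall j, tnth t' (phi j) = tnth t j) ->
  EV t' (ren phi g) = EV t g /\ DL t' (ren phi g) = DL t g.
Proof.
move=> tp; split.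
  by rewrite ev_ren; apply: ev_ext => j; rewrite /av tp.
by rewrite (Dl_ren (ddiM i)); apply: Dl_ext => j; rewrite /av /bv tp.
Qed.

Definition good (x : L) N (t : N.-tuple (idx m n)) (g h : {mpoly K[N]}) : Prop :=
  [/\ okv t, EV t h != 0 & x = EV t g / EV t h].
Definition Qf N (t : N.-tuple (idx m n)) (g h : {mpoly K[N]}) : L :=
  (DL t g * EV t h - EV t g * DL t h) / (EV t h) ^+ 2.

Lemma ren_good N M (phi : 'I_N -> 'I_M) (t : N.-tuple (idx m n)) (t' : M.-tuple (idx m n)) x g h :
  (forall j, tnth t' (phi j) = tnth t j) -> okv t' -> good x t g h ->
  good x t' (ren phi g) (ren phi h) /\ Qf t' (ren phi g) (ren phi h) = Qf t g h.
Proof.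
move=> tp ok' [ok nz ex].
have [eg dg] := ren_facts g tp; have [eh dh] := ren_facts h tp.
by rewrite /good /Qf eg dg eh dh.
Qed.

Lemma combine x y N1 (t1 : N1.-tuple (idx m n)) g1 h1 N2 (t2 : N2.-tuple (idx m n)) g2 h2 :
  good x t1 g1 h1 -> good y t2 g2 h2 ->
  exists M (t : M.-tuple (idx m n)) g1' h1' g2' h2',
    [/\ good x t g1' h1', good y t g2' h2',
        Qf t g1' h1' = Qf t1 g1 h1 & Qf t g2' h2' = Qf t2 g2 h2].
Proof.
move=> gx gy; have ok : okv [tuple of t1 ++ t2].
  by apply: okv_cat; [case: gx|case: gy].
have [gx' qx] := ren_good (tnth_lshift t1 t2) ok gx.
have [gy' qy] := ren_good (tnth_rshift t1 t2) ok gy.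
by do 6 eexists; split; [exact: gx'|exact: gy'|exact: qx|exact: qy].
Qed.

Lemma Q_unique x N1 (t1 : N1.-tuple (idx m n)) g1 h1 N2 (t2 : N2.-tuple (idx m n)) g2 h2 :
  good x t1 g1 h1 -> good x t2 g2 h2 -> Qf t1 g1 h1 = Qf t2 g2 h2.
Proof.
move=> gx gy; have [M [t [g1' [h1' [g2' [h2' [[ok nz1 e1] [_ nz2 e2] <- <-]]]]]]] := combine gx gy.
have hk := K1 (f := g1' * h2' - g2' * h1') ok.
rewrite evB !evM DlB !(DlM (ddiM i)) in hk.
have u1 : EV t g1' = x * EV t h1' by rewrite e1 divfK.
have u2 : EV t g2' = x * EV t h2' by rewrite e2 divfK.
rewrite /Qf u1 u2 in hk *.
have {}hk := hk (ltac:(by rewrite mulrAC -mulrA (mulrC (EV t h2')) mulrA subrr)).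
set A := DL t g1' in hk *; set B := DL t h1' in hk *; set C := DL t g2' in hk *.
set E := DL t h2' in hk *; set v1 := EV t h1' in hk nz1 *; set v2 := EV t h2' in hk nz2 *.
have H' : (A - x * B) * v2 = (C - x * E) * v1.
  apply/eqP; rewrite -subr_eq0 -hk; apply/eqP; ring.

rewrite (_ : (A * v1 - x * v1 * B) / v1 ^+ 2 = (A - x * B) * v2 / (v1 * v2)); last by field; rewrite nz1 nz2.
rewrite (_ : (C * v2 - x * v2 * E) / v2 ^+ 2 = (C - x * E) * v1 / (v1 * v2)); last by field; rewrite nz1 nz2.
by rewrite H'.
Qed.


Lemma tnth1 (T : Type) (x : T) (j : 'I_1) : tnth [tuple x] j = x.
Proof. by rewrite (ord1 j). Qed.

Definition Rep := {N : nat & ((N.-tuple (idx m n)) * {mpoly K[N]} * {mpoly K[N]})%type}.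
Definition goodR (x : L) (r : Rep) : Prop := good x (projT2 r).1.1 (projT2 r).1.2 (projT2 r).2.
Definition QR (r : Rep) : L := Qf (projT2 r).1.1 (projT2 r).1.2 (projT2 r).2.
Definition r0 : Rep := existT _ 0%N ([tuple], 0, 0).
Definition Dx (x : L) : L := QR (epsilon (inhabits r0) (goodR x)).

Lemma Dx_rep x N (t : N.-tuple (idx m n)) g h : good x t g h -> Dx x = Qf t g h.
Proof.
move=> gx; have ex : exists r, goodR x r by exists (existT _ N (t, g, h)).
have := epsilon_spec (inhabits r0) (goodR x) ex; rewrite /Dx.
case: (epsilon _ _) => N' [[t' g'] h'] /= gx'.
exact: Q_unique gx' gx.
Qed.

Definition Fi := genf iota a (fun p => below (maddeps p.1 i, p.2) b).

Lemma rep_ex x : Fi x -> exists N (t : N.-tuple (idx m n)) g h, good x t g h.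
Proof.
elim=> [c|_ [p [Pp ->]]|x1 x2 _ [N1 [t1 [g1 [h1 r1]]]] _ [N2 [t2 [g2 [h2 r2]]]]
       |x1 _ [N1 [t1 [g1 [h1 [ok nz e]]]]]
       |x1 x2 _ [N1 [t1 [g1 [h1 r1]]]] _ [N2 [t2 [g2 [h2 r2]]]]
       |x1 _ [N1 [t1 [g1 [h1 [ok nz e]]]]]].
- exists 0%N, [tuple], c%:MP, 1; split; first by case.
    by rewrite ev1 oner_eq0.
  by rewrite ev1 divr1 evC.
- exists 1%N, [tuple p], 'X_ord0, 1; split.
  + by move=> j; rewrite tnth1.
  + by rewrite ev1 oner_eq0.
  + by rewrite ev1 divr1 evX /av tnth1.
- have [M [t [g1' [h1' [g2' [h2' [[ok nz1 e1] [_ nz2 e2] _ _]]]]]]] := combine r1 r2.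
  exists M, t, (g1' * h2' + g2' * h1'), (h1' * h2'); split=> //.
    by rewrite evM mulf_neq0.
  by rewrite e1 e2 evD !evM; field; rewrite nz1 nz2.
- exists N1, t1, (- g1), h1; split=> //.
  by rewrite e evN mulNr.
- have [M [t [g1' [h1' [g2' [h2' [[ok nz1 e1] [_ nz2 e2] _ _]]]]]]] := combine r1 r2.
  exists M, t, (g1' * g2'), (h1' * h2'); split=> //.
    by rewrite evM mulf_neq0.
  by rewrite e1 e2 !evM; field; rewrite nz1 nz2.
- have [z|nz'] := eqVneq (EV t1 g1) 0.
    exists N1, t1, 0, h1; split=> //.
    by rewrite e z mul0r invr0 ev0 mul0r.
  exists N1, t1, h1, g1; split=> //.
  by rewrite e invf_div.
Qed.

Lemma part1 : exists D : L -> L,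
      [/\ forall c : K, D (iota c) = iota (d i c),
          forall x y, Fi x -> Fi y -> D (x + y) = D x + D y,
          forall x y, Fi x -> Fi y -> D (x * y) = D x * y + x * D y
        & forall (s : mindex m) (k : 'I_n), below (maddeps s i, k) b ->
            D (a s k) = a (maddeps s i) k].
Proof.
exists Dx; split.
- move=> c; have gc : good (iota c) ([tuple] : 0.-tuple (idx m n)) c%:MP 1.
    by split; [case| rewrite ev1 oner_eq0| rewrite ev1 divr1 evC].
  rewrite (Dx_rep gc) /Qf DlC (Dl1 (ddiM i)) evC ev1 /=.
  by rewrite mulr0 mulr1 subr0 expr1n divr1.
- move=> x y /rep_ex[N1 [t1 [g1 [h1 r1]]]] /rep_ex[N2 [t2 [g2 [h2 r2]]]].
  have [M [t [g1' [h1' [g2' [h2' [[ok nz1 e1] [_ nz2 e2] q1 q2]]]]]]] := combine r1 r2.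
  have gxy : good (x + y) t (g1' * h2' + g2' * h1') (h1' * h2').
    split=> //; first by rewrite evM mulf_neq0.
    by rewrite e1 e2 evD !evM; field; rewrite nz1 nz2.
  rewrite (Dx_rep gxy) (Dx_rep r1) (Dx_rep r2) -q1 -q2 /Qf.
  rewrite !DlD !(DlM (ddiM i)) !evD !evM.
  by field; rewrite nz1 nz2.
- move=> x y /rep_ex[N1 [t1 [g1 [h1 r1]]]] /rep_ex[N2 [t2 [g2 [h2 r2]]]].
  have [M [t [g1' [h1' [g2' [h2' [[ok nz1 e1] [_ nz2 e2] q1 q2]]]]]]] := combine r1 r2.
  have gxy : good (x * y) t (g1' * g2') (h1' * h2').
    split=> //; first by rewrite evM mulf_neq0.
    by rewrite e1 e2 !evM; field; rewrite nz1 nz2.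
  rewrite (Dx_rep gxy) (Dx_rep r1) (Dx_rep r2) -q1 -q2 /Qf e1 e2.
  rewrite !(DlM (ddiM i)) !evM.
  by field; rewrite nz1 nz2.
- move=> s k hb.
  have gs : good (a s k) [tuple (s, k)] 'X_ord0 1.
    split; [by move=> j; rewrite tnth1| by rewrite ev1 oner_eq0|].
    by rewrite ev1 divr1 evX /av tnth1.
  rewrite (Dx_rep gs) /Qf (DlX (ddiM i)) (Dl1 (ddiM i)) ev1 evX.
  by rewrite /bv /av tnth1 /= mulr1 mulr0 subr0 expr1n divr1.
Qed.


Lemma part2 (s : mindex m) (k : 'I_n) :
  sep_leader iota a s k -> below (maddeps s i, k) b ->
  genf iota a (fun p => idx_lt p (maddeps s i, k)) (a (maddeps s i) k)
  /\ sep_leader iota a (maddeps s i) k.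
Proof.
move=> [p [pnz Gp ra sp]] hb.
have [D [DC DD DM Da]] := part1.
set G := genf iota a (fun p => idx_lt p (s, k)) in Gp.
set H := genf iota a (fun p => idx_lt p (maddeps s i, k)).
have GF x : G x -> Fi x.
  apply: in_gen_mono => y [q [qlt ->]]; exists q; split=> //.
  apply: below_lt hb; by rewrite (idx_lt_shift q (s, k)).
have GH x : G x -> H x.
  apply: in_gen_mono => y [q [qlt ->]]; exists q; split=> //.
  exact: idx_lt_trans qlt (lt_step _ _ _).
set a0 := a s k.
have Fa0 : Fi a0 by apply: gen_S; exists (s, k).
have Ha0 : H a0 by apply: gen_S; exists (s, k); split=> //; apply: lt_step.
have D0 : D 0 = 0 by rewrite -(rmorph0 iota) DC d0 rmorph0.
have D1 : D 1 = 0 by rewrite -(rmorph1 iota) DC d1 rmorph0.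
have DN x : Fi x -> D (- x) = - D x.
  move=> Fx; apply/eqP; rewrite -subr_eq0 opprK addrC -DD ?subrr ?D0 //; exact: gen_opp.
have H0 : H 0 by apply: in_gen0.
have HC x : G x -> H (D x).
  elim=> [c|y [q [qlt ->]]|y z Gy Hy Gz Hz|y Gy Hy|y z Gy Hy Gz Hz|y Gy Hy].
  - by rewrite DC; apply: gen_K.
  - rewrite Da; last by apply: below_lt hb; rewrite (idx_lt_shift q (s, k)).
    by apply: gen_S; exists (maddeps q.1 i, q.2); split=> //; rewrite (idx_lt_shift q (s, k)).
  - by rewrite DD; [apply: gen_add|apply: GF|apply: GF].
  - by rewrite DN; [apply: gen_opp|apply: GF].
  - rewrite DM; [|apply: GF => //|apply: GF => //].
    by apply: gen_add; apply: gen_mul => //; apply: GH.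
  - have [->|nz] := eqVneq y 0; first by rewrite invr0 D0.
    have e : D y * y^-1 + y * D (y^-1) = 0.
      rewrite -DM; [by rewrite divff // D1|exact: GF|apply: gen_inv; exact: GF].
    have e' : y * D (y^-1) = - (D y * y^-1).
      by rewrite -(addKr (D y * y^-1) (y * D y^-1)) e addr0.
    have -> : D (y^-1) = y^-1 * - (D y * y^-1) by rewrite -e' mulKf.
    apply: gen_mul; first by apply: gen_inv; apply: GH.
    apply: gen_opp; apply: gen_mul => //; apply: gen_inv; exact: GH.
have HL (q : {poly L}) : (forall j, G q`_j) ->
    [/\ Fi q.[a0], H q.[a0], H q^`().[a0] & exists2 e, H e & D q.[a0] = e + q^`().[a0] * D a0].
  elim/poly_ind: q => [|q c IH] Gq.
    rewrite deriv0 horner0; split=> //; [exact: in_gen0|exists 0 => //].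
    by rewrite D0 mul0r addr0.
  have Gq' : forall j, G q`_j.
    by move=> j; have := Gq j.+1; rewrite coefD coefMX coefC addr0.
  have Gc : G c by have := Gq 0%N; rewrite coefD coefMX coefC /= add0r.
  have [Fq Hq Hq' [e He De]] := IH Gq'.
  rewrite derivMXaddC hornerMXaddC hornerD hornerMX; split.
  - by apply: gen_add; [apply: gen_mul|apply: GF].
  - by apply: gen_add; [apply: gen_mul|apply: GH].
  - by apply: gen_add => //; apply: gen_mul.
  - exists (e * a0 + D c); first by apply: gen_add; [apply: gen_mul|apply: HC].
    rewrite DD; [|by apply: gen_mul|by apply: GF].
    rewrite DM // De; ring.
have [_ _ Hp' [e He De]] := HL p Gp.
have nz := sep_deriv_nz sp ra.
move/eqP: ra; rewrite -/a0 => ra; rewrite ra D0 in De.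
have Dae : D a0 = - e / p^`().[a0].
  have h : p^`().[a0] * D a0 = - e by rewrite -(addKr e (p^`().[a0] * D a0)) -De addr0.
  by rewrite -h mulrC mulKf.
have Ha1 : H (a (maddeps s i) k).
  rewrite -Da // Dae; apply: gen_mul; [exact: gen_opp|exact: gen_inv].
split=> //.
exists ('X - (a (maddeps s i) k)%:P); split.
- by rewrite polyXsubC_eq0.
- move=> j; rewrite coefB coefX coefC.
  case: j => [|[|j]] /=; rewrite ?subr0 ?sub0r.
  + exact: gen_opp.
  + by rewrite -(rmorph1 iota); apply: gen_K.
  + exact: in_gen0.
- by rewrite root_XsubC.
- by have := separable_prod_XsubC [:: a (maddeps s i) k]; rewrite big_seq1.
Qed.

End Fixi.

Lemma part3 (s r : mindex m) (k : 'I_n) :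
  below (r, k) b -> mle s r -> sep_leader iota a s k -> sep_leader iota a r k.
Proof.
move=> hb; move e : (mabs r - mabs s)%N => M; elim: M s e => [|M IH] s e hle hs.
  have hm := mle_mabs hle.
  by rewrite -(mle_eq hle) //; apply/eqP; rewrite eqn_leq hm -subn_eq0 e.
case: (pickP (fun j => s j < r j)%N) => [i lt|none].
  have hle' : mle (maddeps s i) r.
    move=> j; rewrite /maddeps /meps !ffunE; case: eqP => [->|_]; first by rewrite addn1.
    by rewrite addn0; apply: hle.
  have hb' : below (maddeps s i, k) b by apply: below_le hb; apply: mle_idx_le.
  have [_ hs'] := part2 hs hb'.
  apply: (IH (maddeps s i)) => //.
  by rewrite mabs_maddeps subnS e.
have sr : s = r.
  by apply/ffunP => j; apply/eqP; rewrite eqn_leq hle leqNgt none.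
by move: e; rewrite sr subnn.
Qed.

End Main.

Theorem lemma4p1 (m n : nat) (K L : fieldType) (d : 'I_m -> K -> K)
  (iota : {rmorphism K -> L}) (a : mindex m -> 'I_n -> L) (b : option (idx m n)) :
  (0 < m)%N -> (0 < n)%N ->
  (forall i, is_derivation (d i)) ->
  (forall i j x, d i (d j x) = d j (d i x)) ->
  (forall x : L, genf iota a (fun p => below p b) x) ->
  differential_condition iota d a b ->
  [/\
   (* (1) *)
   (forall i : 'I_m, exists D : L -> L,
      let F := genf iota a (fun p => below (maddeps p.1 i, p.2) b) in
      [/\ forall c : K, D (iota c) = iota (d i c),
          forall x y, F x -> F y -> D (x + y) = D x + D y,
          forall x y, F x -> F y -> D (x * y) = D x * y + x * D y
        & forall (s : mindex m) (k : 'I_n), below (maddeps s i, k) b ->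
            D (a s k) = a (maddeps s i) k]),
   (* (2) *)
   (forall (i : 'I_m) (s : mindex m) (k : 'I_n),
      sep_leader iota a s k -> below (maddeps s i, k) b ->
      genf iota a (fun p => idx_lt p (maddeps s i, k)) (a (maddeps s i) k)
      /\ sep_leader iota a (maddeps s i) k)
 & (* (3) *)
   (forall (s r : mindex m) (k : 'I_n),
      below (r, k) b -> mle s r -> sep_leader iota a s k ->
      sep_leader iota a r k)].
Proof.
move=> _ _ Hder _ _ Hdc; split.
- move=> i; exact: (part1 Hder Hdc i).
- move=> i s k; exact: (part2 Hder Hdc).
- move=> s r k; exact: (part3 Hder Hdc).
Qed.
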